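(* Let $s\ge2$ and let $\mathcal{C}$ be an $[n,k,d]_q$ linear code with multiple $(r_i,\delta_i)_{i\in[s]}$ localities with respect to a partition $\mathcal{T}_1,\dots,\mathcal{T}_s$ of $[n]$, $n_i=|\mathcal{T}_i|$, $r_1\le\dots\le r_s$, $\delta_1\ge\dots\ge\delta_s\ge2$. Let $\Delta_0=0$ and $\Delta_j=\sum_{i=1}^{j}\lceil n_i/(r_i+\delta_i-1)\rceil(\delta_i-1)$ for $j=1,\dots,s-1$. Suppose $\sum_{i=1}^{s-1}r_i\lceil n_i/(r_i+\delta_i-1)\rceil\le k-1$ and, for each $j=1,\dots,s-1$, $$r_j\left\lceil\frac{\Delta_j-\Delta_{j-1}-1}{\delta_j-1}\right\rceil+(\Delta_j-\Delta_{j-1}-1)<n_j.$$ Then $$d\le n-k+1-\sum_{i=1}^{s-1}\left\lceil\frac{n_i}{r_i+\delta_i-1}\right\rceil(\delta_i-1)-\left(\left\lceil\frac{k-\sum_{i=1}^{s-1}r_i\lceil n_i/(r_i+\delta_i-1)\rceil}{r_s}\right\rceil-1\right)(\delta_s-1).$$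
   Context: $[n]=\{1,\dots,n\}$. For an $[n,k,d]_q$ linear code with generator matrix columns $\vec g_1,\dots,\vec g_n$, a regenerating set of coordinate $i$ is a (minimal) subset $R\subseteq[n]$ with $i\in R$ such that $\vec g_i$ is an $\mathbb{F}_q$-linear combination of $\{\vec g_j\}_{j\in R\setminus\{i\}}$ and no proper subset of $R\setminus\{i\}$ suffices; $\mathcal{R}_i$ is the set of regenerating sets of coordinate $i$. Multiple $(r_i,\delta_i)_{i\in[s]}$ localities: $\mathcal{T}_1,\dots,\mathcal{T}_s$ is a partition of $[n]$, $r_1\le\dots\le r_s$ and $\delta_1\ge\dots\ge\delta_s\ge2$ are integers, and for each $i\in[s]$ and each $\iota\in\mathcal{T}_i$ there is $S_\iota\subseteq\mathcal{T}_i$ with $\iota\in S_\iota$, $\delta_i\le|S_\iota|\le r_i+\delta_i-1$, such that for every $E\subseteq S_\iota$ with $|E|=\delta_i-1$ and every $j\in E$, $(S_\iota\setminus E)\cup\{j\}\in\mathcal{R}_j$. *)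

(* Defs.v *)
From mathcomp Require Import all_boot all_order all_algebra.
Set Implicit Arguments. Unset Strict Implicit. Unset Printing Implicit Defensive.
Import GRing.Theory.
Local Open Scope ring_scope.

Definition ceil_div (a b : nat) : nat := ((a + b.-1) %/ b)%N.

Section Codes.
Variables (F : finFieldType) (k n : nat).

Definition wt (c : 'rV[F]_n) : nat := #|[set j | c 0 j != 0]|.

Definition codeword (G : 'M[F]_(k, n)) (c : 'rV[F]_n) : Prop :=
  exists m : 'rV[F]_k, c = m *m G.

Definition is_min_dist (G : 'M[F]_(k, n)) (d : nat) : Prop :=
  (exists c, codeword G c /\ c != 0 /\ wt c = d) /\
  (forall c, codeword G c -> c != 0 -> (d <= wt c)%N).

Definition lin_comb (G : 'M[F]_(k, n)) (i : 'I_n) (S : {set 'I_n}) : Prop :=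
  exists a : 'I_n -> F, col i G = \sum_(j in S) a j *: col j G.

Definition regen (G : 'M[F]_(k, n)) (i : 'I_n) (R : {set 'I_n}) : Prop :=
  i \in R /\ lin_comb G i (R :\ i) /\
  (forall S : {set 'I_n}, S \proper (R :\ i) -> ~ lin_comb G i S).

(* Multiple (r_i, delta_i)_{i in [s]} localities w.r.t. partition T
   (0-based indices i : 'I_s). *)
Definition multiple_localities (s : nat) (G : 'M[F]_(k, n))
  (T : 'I_s -> {set 'I_n}) (r delta : 'I_s -> nat) : Prop :=
  (forall i j : 'I_s, i != j -> [disjoint T i & T j]) /\
  (\bigcup_(i < s) T i = setT) /\
  (forall i, T i != set0) /\
  (forall i j : 'I_s, (i <= j)%N -> (r i <= r j)%N) /\
  (forall i j : 'I_s, (i <= j)%N -> (delta j <= delta i)%N) /\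
  (forall i, (2 <= delta i)%N) /\
  (forall (i : 'I_s) (iota : 'I_n), iota \in T i ->
     exists S : {set 'I_n},
       [/\ S \subset T i, iota \in S,
           (delta i <= #|S|)%N, (#|S| <= r i + delta i - 1)%N &
           forall E : {set 'I_n}, E \subset S -> #|E| = (delta i - 1)%N ->
             forall j, j \in E -> regen G j ((S :\: E) :|: [set j])]).

End Codes.

(* Delta_j = sum_{i=1}^{j} ceil(n_i/(r_i+delta_i-1)) (delta_i-1), with the
   paper's 1-based index i corresponding to our 0-based index i-1;
   Delta s0 0 = 0. *)
Definition Delta (s : nat) (nn r delta : 'I_s -> nat) (j : nat) : nat :=
  (\sum_(i < s | (i < j)%N) ceil_div (nn i) (r i + delta i - 1) * (delta i - 1))%N.

(* Main.v *)
Require Import Defs.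
From mathcomp Require Import all_boot all_order all_algebra.
From mathcomp Require Import zify.
Set Implicit Arguments. Unset Strict Implicit. Unset Printing Implicit Defensive.
Import GRing.Theory Num.Theory.


Section LA.
Variables (F : finFieldType) (k n : nat) (G : 'M[F]_(k, n)).
Implicit Types (X Y Z W S : {set 'I_n}) (j p : 'I_n).
Open Scope ring_scope.

Definition MX (X : {set 'I_n}) : 'M[F]_(n, k) :=
  \matrix_(j, a) (if j \in X then (trmx G) j a else 0%R).
Definition rk X := \rank (MX X).
Definition inspan j X := (row j (trmx G) <= MX X)%MS.

Lemma row_MX X j : row j (MX X) = if j \in X then row j (trmx G) else 0.
Proof. by apply/rowP => a; rewrite !mxE; case: ifP; rewrite ?mxE. Qed.

Lemma MX_sub (X Y : {set 'I_n}) : X \subset Y -> (MX X <= MX Y)%MS.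
Proof.
move=> sXY; apply/row_subP => j; rewrite row_MX; case: ifP => jX.
  by have := row_sub j (MX Y); rewrite row_MX (subsetP sXY _ jX).
by rewrite sub0mx.
Qed.

Lemma rk_mono (X Y : {set 'I_n}) : X \subset Y -> (rk X <= rk Y)%N.
Proof. by move=> /MX_sub; apply: mxrankS. Qed.

Lemma inspan_mem j X : j \in X -> inspan j X.
Proof. by move=> jX; have := row_sub j (MX X); rewrite row_MX jX. Qed.

Lemma inspan_mono j (X Y : {set 'I_n}) : X \subset Y -> inspan j X -> inspan j Y.
Proof. by move=> /MX_sub sXY h; apply: submx_trans h sXY. Qed.

Lemma closed_sub (X Y : {set 'I_n}) : (forall j, j \in Y -> inspan j X) -> (MX (X :|: Y) <= MX X)%MS.
Proof.
move=> h; apply/row_subP => j; rewrite row_MX in_setU; case: ifP.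
  by case/orP => [/inspan_mem|/h].
by rewrite sub0mx.
Qed.

Lemma rk_closed (X Y : {set 'I_n}) : (forall j, j \in Y -> inspan j X) -> rk (X :|: Y) = rk X.
Proof.
move=> h; apply/eqP; rewrite eqn_leq; rewrite /rk mxrankS ?closed_sub //.
by rewrite mxrankS // MX_sub // subsetUl.
Qed.

Lemma rk_U1 X j : (rk (j |: X) <= rk X + 1)%N.
Proof.
have sub : (MX (j |: X) <= MX X + row j (trmx G))%MS.
  apply/row_subP => i; rewrite row_MX in_setU1; case: ifP => [/orP[/eqP->|iX]|_].
  - exact: addsmxSr.
  - by apply: submx_trans (addsmxSl _ _); have := row_sub i (MX X); rewrite row_MX iX.
  - by rewrite sub0mx.
apply: leq_trans (mxrankS sub) _.
have [le _] := mxrank_adds_leqif (MX X) (row j (trmx G)); apply: leq_trans le _.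
by rewrite leq_add2l rank_leq_row.
Qed.

Lemma rk_card_gen m : forall X Y, #|Y| = m -> (rk (X :|: Y) <= rk X + m)%N.
Proof.
elim: m => [|m IH] X Y.
  by move/eqP; rewrite cards_eq0 => /eqP->; rewrite setU0 addn0.
move=> cY; have [y yY] : exists y, y \in Y.
  by apply/set0Pn; rewrite -card_gt0 cY.
have e : X :|: Y = y |: (X :|: (Y :\ y)).
  by apply/setP => x; rewrite !inE; case: eqP => [->|_] /=; rewrite ?yY ?orbT.
rewrite e; apply: leq_trans (rk_U1 _ _) _.
rewrite addn1 addnS ltnS; apply: IH.
by move: cY; rewrite (cardsD1 y Y) yY => [[]].
Qed.

Lemma rk_card X Y : (rk (X :|: Y) <= rk X + #|Y :\: X|)%N.
Proof.
have -> : X :|: Y = X :|: (Y :\: X) by rewrite setDE setUIr setUCr setIT.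
exact: rk_card_gen.
Qed.

Lemma rk0 : rk set0 = 0%N.
Proof.
apply/eqP; rewrite mxrank_eq0; apply/eqP/matrixP => i j; by rewrite !mxE in_set0.
Qed.

Lemma rk_le_card X : (rk X <= #|X|)%N.
Proof. by have := rk_card set0 X; rewrite set0U rk0 setD0. Qed.

Lemma MXT : MX setT = (trmx G).
Proof. by apply/matrixP => i j; rewrite !mxE in_setT. Qed.

Hypothesis Hrank : \rank G = k.

Lemma rkT : rk setT = k.
Proof. by rewrite /rk MXT mxrank_tr. Qed.

Lemma notspan_exists X : (rk X < k)%N -> exists j, ~~ inspan j X.
Proof.
move=> lt; apply/existsP; apply: contraLR lt => /existsPn h.
rewrite -leqNgt -{1}rkT /rk mxrankS //; rewrite -(setUT X).
apply: closed_sub => j _; exact/negPn/h.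
Qed.

Lemma rk_grow X S p : p \in S -> ~~ inspan p X -> (rk X < rk (X :|: S))%N.
Proof.
move=> pS np; rewrite ltnNge; apply: contra np => le.
have sXS : (MX X <= MX (X :|: S))%MS by apply: MX_sub; apply: subsetUl.
have [_ eq] := mxrank_leqif_sup sXS.
have h : (MX (X :|: S) <= MX X)%MS by rewrite -eq eqn_leq mxrankS //= le.
by rewrite /inspan (submx_trans _ h) //; apply: inspan_mem; rewrite inE pS orbT.
Qed.

Lemma codeword_small X : (rk X < k)%N ->
  exists c, codeword G c /\ c != 0 /\ (wt c <= n - #|X|)%N.
Proof.
move=> lt.
set A := trmx (MX X).
have kne : kermx A != 0.
  by rewrite -mxrank_eq0 mxrank_ker mxrank_tr -/(rk X) subn_eq0 -ltnNge.
have [i ni] : exists i, row i (kermx A) != 0.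
  apply/existsP; apply: contraR kne => /existsPn h; apply/eqP/row_matrixP => i.
  by rewrite row0; apply/eqP/negPn/h.
set m := row i (kermx A).
have mA : m *m A = 0 by apply/eqP; rewrite -sub_kermx row_sub.
exists (m *m G); split; first by exists m.
split.
  apply: contra ni => /eqP h; apply/eqP.
  apply: (row_free_inj (A:=G)); first by rewrite /row_free Hrank.
  by rewrite h mul0mx.
have -> : (n - #|X| = #|~: X|)%N by rewrite [RHS]cardsCs setCK card_ord.
apply: subset_leq_card; apply/subsetP => j; rewrite !inE; apply: contra => jX.
have <- : (m *m A) 0 j = (m *m G) 0 j.
  by rewrite !mxE; apply: eq_bigr => a _; rewrite [A _ _]mxE /MX mxE jX !mxE.
by rewrite mA mxE.
Qed.

Lemma lincomb_span j (Z W : {set 'I_n}) : Z \subset W -> lin_comb G j Z -> inspan j W.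
Proof.
move=> sZW [a e]; rewrite /inspan -tr_col e raddf_sum /=.
apply: summx_sub => l lZ; rewrite linearZ /= tr_col; apply: scalemx_sub.
by apply: inspan_mem; apply: (subsetP sZW).
Qed.

Close Scope ring_scope.
End LA.
Lemma card_UD (T : finType) (X S : {set T}) : #|X :|: S| = #|X| + #|S :\: X|.
Proof.
have := cardsUI X S; rewrite cardsD setIC.
have := subset_leq_card (subsetIl S X). lia.
Qed.

Lemma subset_ext (T : finType) (B : {set T}) t : forall A : {set T},
  A \subset B -> #|A| + t <= #|B| ->
  exists E : {set T}, [/\ A \subset E, E \subset B & #|E| = #|A| + t].
Proof.
elim: t => [|t IH] A sAB le.
  by exists A; rewrite ?addn0.
have le' : #|A| + t <= #|B| by lia.
case: (IH A sAB le') => E [sAE sEB cE].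
have : E \proper B by rewrite properEcard sEB cE; lia.
case/properP => _ [x xB xE].
exists (x |: E); split.
- by apply: (subset_trans sAE); apply: subsetUr.
- by rewrite subUset sub1set xB.
- by rewrite cardsU1 xE cE addnS.
Qed.

Lemma ceil_le a b m : 0 < b -> a <= m * b -> ceil_div a b <= m.
Proof.
move=> b0 h; rewrite /ceil_div -ltnS ltn_divLR // mulSn.
rewrite -(prednK b0) in h *. lia.
Qed.

Lemma le_ceil a b m : 0 < b -> m * b <= a -> m <= ceil_div a b.
Proof.
move=> b0 h; rewrite /ceil_div; apply: leq_trans (leq_div2r _ (leq_addr _ _)).
by rewrite leq_divRL.
Qed.

Lemma cardCn n (A : {set 'I_n}) : #|~: A| = n - #|A| /\ #|A| <= n.
Proof.
split; first by rewrite [LHS]cardsCs setCK card_ord.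
by rewrite -[X in _ <= X](card_ord n) max_card.
Qed.

Lemma measC (T : finType) (Y Y' : {set T}) : Y \subset Y' -> #|Y| < #|Y'| -> #|~: Y'| < #|~: Y|.
Proof. by move=> h1 h2; apply: proper_card; rewrite properC properEcard h1. Qed.

Section Comb.
Variables (F : finFieldType) (k n : nat) (G : 'M[F]_(k, n)).
Implicit Types (X Y Z W S E : {set 'I_n}) (j p : 'I_n).
Local Notation rk := (rk G).
Local Notation inspan := (inspan G).

Definition goodS S e :=
  e < #|S| /\ forall E, E \subset S -> #|E| = e -> forall j, j \in E -> inspan j (S :\: E).

Lemma gain X S e : goodS S e ->
  rk (X :|: S) = rk X \/ rk (X :|: S) + e <= rk X + #|S :\: X|.
Proof.
move=> [eS Q]; case: (leqP e #|S :\: X|) => [le|lt].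
- have h0 : #|(set0 : {set 'I_n})| + e <= #|S :\: X| by rewrite cards0.
  have [E [_ sE cE]] := subset_ext (sub0set (S :\: X)) h0.
  rewrite cards0 in cE.
  have sES : E \subset S by apply: subset_trans sE (subsetDl _ _).
  have eq1 : X :|: S = (X :|: (S :\: E)) :|: E.
    apply/setP => x; rewrite !inE; case: (boolP (x \in E)) => xE /=.
      by rewrite (subsetP sES x xE) !orbT.
    by rewrite orbF.
  right; rewrite eq1 rk_closed; last first.
    by move=> j jE; apply: inspan_mono (Q E sES cE j jE); apply: subsetUr.
  apply: leq_trans (leq_add (rk_card _ _ _) (leqnn e)) _.
  rewrite -addnA leq_add2l.
  have -> : (S :\: E) :\: X = (S :\: X) :\: E by rewrite setDDl setUC -setDDl.
  rewrite cardsD (setIidPr sE) cE. lia.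
- have h0 : #|S :\: X| + (e - #|S :\: X|) <= #|S|.
    by have := subset_leq_card (subsetDl S X); lia.
  have [E [sE1 sE2 cE]] := subset_ext (subsetDl S X) h0.
  have cE' : #|E| = e by rewrite cE; lia.
  left; apply: rk_closed => j jS.
  have sDX : S :\: E \subset X.
    apply/subsetP => x; rewrite !inE => /andP[xE xS]; apply: contraNT xE => xX.
    by apply: (subsetP sE1); rewrite !inE xX xS.
  case: (boolP (j \in E)) => jE.
  + exact: inspan_mono sDX (Q E sE2 cE' j jE).
  + by apply: inspan_mem; apply: (subsetP sDX); rewrite !inE jE jS.
Qed.

Variables (s : nat) (T : 'I_s -> {set 'I_n}) (r delta : 'I_s -> nat).
Hypothesis Hgrp : forall (i : 'I_s) p, p \in T i -> exists S,
  [/\ S \subset T i, p \in S, #|S| <= r i + (delta i - 1) & goodS S (delta i - 1)].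

Lemma step X i p : p \in T i -> p \notin X -> exists X',
  [/\ X \subset X', X' \subset X :|: T i, #|X| < #|X'|, rk X' <= rk X + r i &
      rk X' = rk X \/ rk X' + #|X| + (delta i - 1) <= rk X + #|X'|].
Proof.
move=> pT pX; have [S [sST pS cS gS]] := Hgrp pT.
exists (X :|: S).
have c1 : 0 < #|S :\: X| by apply/card_gt0P; exists p; rewrite !inE pX pS.
have c2 : #|S :\: X| <= #|S| by apply: subset_leq_card; apply: subsetDl.
rewrite card_UD; split.
- exact: subsetUl.
- by apply: setUS.
- lia.
- by case: (gain X gS) => h; lia.
- by case: (gain X gS) => h; [left|right]; lia.
Qed.

Lemma phase i X0 c : 0 < delta i - 1 -> [disjoint X0 & T i] ->
  r i * ceil_div (c * (delta i - 1) - 1) (delta i - 1) + (c * (delta i - 1) - 1) < #|T i| ->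
  exists X, [/\ X0 \subset X, X \subset X0 :|: T i, rk X <= rk X0 + r i * c &
                rk X + #|X0| + c * (delta i - 1) <= rk X0 + #|X|].
Proof.
set e := delta i - 1 => e0 dis HT.
suff H : forall m Y a, #|~: Y| <= m -> X0 \subset Y -> Y \subset X0 :|: T i -> a <= c ->
  rk Y <= rk X0 + r i * a -> rk Y + #|X0| + a * e <= rk X0 + #|Y| ->
  exists X, [/\ X0 \subset X, X \subset X0 :|: T i, rk X <= rk X0 + r i * c &
                rk X + #|X0| + c * e <= rk X0 + #|X|].
  by apply: (H _ X0 0) => //; [exact: subsetUl| rewrite muln0 addn0 | rewrite mul0n addn0].
have findp : forall Y a, X0 \subset Y -> rk Y <= rk X0 + r i * a ->
    rk Y + #|X0| + a * e <= rk X0 + #|Y| -> rk X0 + #|Y| < rk Y + #|X0| + c * e ->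
    exists2 p, p \in T i & p \notin Y.
  move=> Y a s0 h1 h2 hc.
  apply/exists_inP; rewrite -(negbK [exists _ in _, _]); apply/negP => /exists_inPn hall.
  have sT : T i \subset Y :&: T i.
    by apply/subsetP => x xT; rewrite inE xT andbT; apply/negPn/hall.
  have : #|Y :&: T i| <= #|Y :\: X0|.
    apply: subset_leq_card; apply/subsetP => x; rewrite !inE => /andP[xY xT].
    rewrite xY andbT; apply/negP => xX0.
    by move: dis; rewrite disjoint_subset => /subsetP /(_ x xX0); rewrite !inE xT.
  rewrite cardsD (setIidPr s0).
  have := subset_leq_card sT.
  have ae : a * e <= c * e - 1 by lia.
  have ac2 : a <= ceil_div (c * e - 1) e by apply: le_ceil.
  have : r i * a <= r i * ceil_div (c * e - 1) e by rewrite leq_mul2l ac2 orbT.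
  lia.
elim=> [|m IH] Y a cY s0 s1 ac h1 h2.
  case: (leqP (rk Y + #|X0| + c * e) (rk X0 + #|Y|)) => hc.
    exists Y; split => //; apply: leq_trans h1 _; by rewrite leq_add2l leq_mul2l ac orbT.
  have [p pT pY] := findp Y a s0 h1 h2 hc.
  have : 0 < #|~: Y| by apply/card_gt0P; exists p; rewrite inE.
  lia.
case: (leqP (rk Y + #|X0| + c * e) (rk X0 + #|Y|)) => hc.
  exists Y; split => //; apply: leq_trans h1 _; by rewrite leq_add2l leq_mul2l ac orbT.
have [p pT pY] := findp Y a s0 h1 h2 hc.
have [Y' [sYY' sY' cY' rY' hY']] := step pT pY.
have sY'2 : Y' \subset X0 :|: T i.
  apply: subset_trans sY' _; by rewrite subUset s1 subsetUr.
have cm : #|~: Y'| <= m.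
  have := measC sYY' cY'; lia.
case: hY' => hY'.
  apply: (IH Y' a); [lia | exact: subset_trans s0 sYY' | exact: sY'2 | exact: ac | by rewrite hY' | lia].
have ac' : a < c by rewrite -(ltn_pmul2r e0); lia.
apply: (IH Y' a.+1); [lia | exact: subset_trans s0 sYY' | exact: sY'2 | exact: ac' | rewrite mulnS; lia | rewrite mulSn; lia].
Qed.

Hypothesis Hrank : \rank G = k.

Lemma pad X : rk X < k -> exists Y, rk Y = k.-1 /\ rk Y + #|X| <= rk X + #|Y|.
Proof.
move: {2}#|~: X| (leqnn #|~: X|) => m; elim: m X => [|m IH] X cX lt;
  (case: (ltnP (rk X) k.-1) => hk; last by exists X; split => //; lia);
  have [p np] := notspan_exists Hrank lt;
  have pX : p \notin X by apply: contra np; apply: inspan_mem.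
- have : 0 < #|~: X| by apply/card_gt0P; exists p; rewrite inE.
  lia.
- have r1 := rk_U1 G X p.
  have c1 : #|p |: X| = #|X|.+1 by rewrite cardsU1 pX.
  have cm : #|~: (p |: X)| <= m.
    have := @measC _ X (p |: X) (subsetUr _ _); rewrite c1 => /(_ (leqnn _)) h.
    by rewrite -ltnS (leq_trans h cX).
  have lt' : rk (p |: X) < k by lia.
  have [Y [h1 h2]] := IH (p |: X) cm lt'.
  exists Y; split => //; rewrite c1 in h2; move: r1 h2; move: (rk (p |: X)) => R; lia.
Qed.

Variables (rs es : nat).
Hypothesis Hcover : forall p, exists i, p \in T i.
Hypothesis Hrs : forall i, r i <= rs.
Hypothesis Hes : forall i, es <= delta i - 1.

Lemma final X0 K : rk X0 <= K -> K < k -> exists X t,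
  [/\ rk X < k, rk X + #|X0| + t * es <= rk X0 + #|X| & k <= K + t.+1 * rs].
Proof.
move=> h0 hK.
suff H : forall m Y t, #|~: Y| <= m -> rk Y < k -> rk Y <= K + t * rs ->
    rk Y + #|X0| + t * es <= rk X0 + #|Y| -> exists X t,
  [/\ rk X < k, rk X + #|X0| + t * es <= rk X0 + #|X| & k <= K + t.+1 * rs].
  by apply: (H _ X0 0) => //; [lia | lia | lia].
elim=> [|m IH] Y t cY lt h1 h2;
  (case: (leqP k (rk Y + rs)) => hk; first by exists Y, t; split => //; rewrite mulSn; lia);
  have [p np] := notspan_exists Hrank lt;
  have pY : p \notin Y by apply: contra np; apply: inspan_mem.
- have : 0 < #|~: Y| by apply/card_gt0P; exists p; rewrite inE.
  lia.
- have [i pT] := Hcover p.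
  have [S [sST pS cS gS]] := Hgrp pT.
  have gr := rk_grow pS np.
  have c2 : #|S :\: Y| <= #|S| by apply: subset_leq_card; apply: subsetDl.
  have c3 := card_UD Y S.
  have c1 : 0 < #|S :\: Y| by apply/card_gt0P; exists p; rewrite !inE pY pS.
  have ri := Hrs i; have ei := Hes i.
  case: (gain Y gS) => hg; first by lia.
  apply: (IH (Y :|: S) t.+1).
  + have := @measC _ Y (Y :|: S) (subsetUl _ _); rewrite c3 => /(_ _); lia.
  + lia.
  + rewrite mulSn; lia.
  + rewrite mulSn; lia.
Qed.
End Comb.

Lemma sum_split s (Fn : 'I_s -> nat) j (h : j < s) :
  \sum_(i < s | i < j.+1) Fn i = \sum_(i < s | i < j) Fn i + Fn (Ordinal h).
Proof.
rewrite (bigD1 (Ordinal h)) /=; last by [].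
rewrite addnC; congr (_ + _); apply: eq_bigl => i.
by rewrite ltnS -val_eqE /= andbC -ltn_neqAle.
Qed.

Unset Implicit Arguments.
Unset Strict Implicit.

Theorem theorem2 (F : finFieldType) (n k d s : nat) (G : 'M[F]_(k, n))
  (T : 'I_s -> {set 'I_n}) (r delta : 'I_s -> nat)
  (Hs : (2 <= s)%N)
  (Hrank : \rank G = k)
  (Hd : is_min_dist G d)
  (Hloc : multiple_localities G T r delta)
  (Hsum : ((\sum_(i < s | (i < s.-1)%N)
              r i * ceil_div #|T i| (r i + delta i - 1)) + 1 <= k)%N)
  (Hj : forall j : 'I_s, (j < s.-1)%N ->
     let nn := fun i => #|T i| in
     let D := (Delta nn r delta j.+1 - Delta nn r delta j - 1)%N in
     (r j * ceil_div D (delta j - 1) + D < nn j)%N)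
  (slast : 'I_s) (Hslast : nat_of_ord slast = s.-1) :
  let nn := fun i => #|T i| in
  ((d : int) <= (n : int) - (k : int) + 1
     - (\sum_(i < s | (i < s.-1)%N)
          (ceil_div (nn i) (r i + delta i - 1) * (delta i - 1))%N : int)%R
     - (((ceil_div (k - \sum_(i < s | (i < s.-1)%N)
                          r i * ceil_div (nn i) (r i + delta i - 1))
                   (r slast) : int) - 1)
        * ((delta slast - 1)%N : int))%R)%R.
Proof.
cbv zeta.
case: Hloc => [Hdis [Hcov [Hne [Hrm [Hdm [Hd2 Hgr]]]]]].
have Hgrp : forall (i : 'I_s) p, p \in T i -> exists S : {set 'I_n},
  [/\ S \subset T i, p \in S, #|S| <= r i + (delta i - 1) & goodS G S (delta i - 1)].
  move=> i p pT; have [S [sST pS c1 c2 Q]] := Hgr i p pT.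
  have d2 := Hd2 i.
  exists S; split => //; first lia.
  split; first lia.
  move=> E sES cE j jE; have [_ [lc _]] := Q E sES cE j jE.
  apply: lincomb_span lc; apply/subsetP => x; rewrite !inE.
  by case/andP => xj /orP[//|xj']; rewrite xj' in xj.
have rpos : forall i, 0 < r i.
  move=> i; have [p pT] := set0Pn _ (Hne i).
  have [S [_ _ c1 [c2 _]]] := Hgrp i p pT; have := Hd2 i; lia.
set c := fun i => ceil_div #|T i| (r i + delta i - 1).
have phases : forall j, j <= s.-1 -> exists X : {set 'I_n},
   [/\ forall x, x \in X -> exists2 i : 'I_s, i < j & x \in T i,
       rk G X <= \sum_(i < s | i < j) r i * c i &
       rk G X + \sum_(i < s | i < j) c i * (delta i - 1) <= #|X|].
  elim=> [|j IH] hj.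
    exists set0; split.
    - by move=> x; rewrite inE.
    - by rewrite rk0.
    - by rewrite rk0 big_pred0.
  have hjs : j < s by lia.
  have [X [memX rX eX]] := IH (ltnW hj).
  set i0 := Ordinal hjs.
  have dis : [disjoint X & T i0].
    rewrite disjoint_subset; apply/subsetP => x xX; rewrite inE.
    have [i ij xT] := memX x xX.
    have ne : i != i0 by rewrite -val_eqE /= neq_ltn ij.
    have := Hdis i i0 ne; rewrite disjoint_subset => /subsetP /(_ x xT).
    by rewrite inE.
  have e0 : 0 < delta i0 - 1 by have := Hd2 i0; lia.
  have HT := Hj i0 hj; rewrite /= /Delta (sum_split _ hjs) in HT.
  rewrite -/i0 addKn in HT.
  have [X' [s1 s2 r1 e1]] := phase Hgrp (c := c i0) e0 dis HT.
  exists X'; split.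
  - move=> x xX'; have := subsetP s2 x xX'; rewrite inE => /orP[/memX [i ij xT]|xT].
      by exists i => //; apply: ltn_trans ij _.
    by exists i0.
  - rewrite (sum_split _ hjs) -/i0; lia.
  - rewrite (sum_split _ hjs) -/i0; lia.
have hs1 : s.-1 <= s.-1 by [].
have [X1 [_ rX1 eX1]] := phases _ hs1.
set K := \sum_(i < s | i < s.-1) r i * c i in rX1.
set Dl := \sum_(i < s | i < s.-1) c i * (delta i - 1) in eX1.
have HK : K < k by rewrite /K /c; lia.
have Hcover : forall p, exists i, p \in T i.
  move=> p; have : p \in \bigcup_(i < s) T i by rewrite Hcov inE.
  by case/bigcupP => i _ pT; exists i.
have Hrs : forall i, r i <= r slast.
  by move=> i; apply: Hrm; rewrite Hslast; have := ltn_ord i; lia.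
have Hes : forall i, delta slast - 1 <= delta i - 1.
  by move=> i; apply: leq_sub2r; apply: Hdm; rewrite Hslast; have := ltn_ord i; lia.
have [X [t [lX eX kt]]] := final Hgrp Hrank Hcover Hrs Hes (leq_trans rX1 (leqnn K)) HK.
have [Y [rY eY]] := pad Hrank lX.
have lY : rk G Y < k by lia.
have [cw [cwc [cw0 wY]]] := codeword_small Hrank lY.
have dw := Hd.2 cw cwc cw0.
have [_ Yn] := cardCn Y.
have rs0 := rpos slast.
have Cle : ceil_div (k - K) (r slast) <= t.+1.
  by apply: ceil_le => //; lia.
have C1 : 1 <= ceil_div (k - K) (r slast).
  by rewrite /ceil_div leq_divRL // mul1n; lia.
have Pt : (ceil_div (k - K) (r slast) - 1) * (delta slast - 1) <= t * (delta slast - 1).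
  by apply: leq_mul => //; lia.
rewrite -/c -/K -/Dl.
rewrite (subzn C1) -PoszM.
move: Pt; move: ((ceil_div (k - K) (r slast) - 1) * (delta slast - 1))%N => P Pt.
move: Dl eX1 => Dl eX1.
lia.
Qed.
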